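(* The set FIN of programs computing a function with finite domain has asymptotic probability one, and the set COF of programs computing a function with cofinite domain has asymptotic probability zero.
   Context: Model of computation: a single head reads and writes symbols $0,1$ on a one-way infinite tape with cells indexed $0,1,2,\dots$; the head starts on cell $0$. An $n$-state program has states $Q=\{q_1,\dots,q_n\}$, with $q_1$ the start state, plus a separate halt state not in $Q$. A program is a function $p: Q\times\{0,1\}\to (Q\cup\{\mathrm{halt}\})\times\{0,1\}\times\{L,R\}$; $p(q,i)=\langle r,j,d\rangle$ means: in state $q$ reading $i$, write $j$, move one cell in direction $d$, enter state $r$. The computation stops when the halt state is reached (''halting'') or when the head attempts to move left from cell $0$ (''falls off the tape''); falling off is not counted as halting. Let $P_n$ be the set of all $n$-state programs; the asymptotic probability of a set $B$ of programs is $\mu(B)=\lim_{n\to\infty}|B\cap P_n|/|P_n|$. Programs compute partial functions on $\mathbb{N}$ with input given in unary: input $m$ is a block of $1$s of length determined by $m$ starting at cell $0$, followed by $0$s; the domain of the function computed by $p$ is the set of inputs on which $p$ halts. FIN is the set of programs whose computed function has finite domain; COF is the set of programs whose computed function has cofinite domain. *)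

(* Defs.v *)
From HB Require Import structures.
From mathcomp Require Import all_boot all_order all_algebra.
From mathcomp Require Import boolp classical_sets reals topology normedtype sequences.
Set Implicit Arguments. Unset Strict Implicit. Unset Printing Implicit Defensive.
Import Order.TTheory GRing.Theory Num.Theory numFieldNormedType.Exports.

(* Programs with n.+1 states: states are 'I_n.+1, start state q_1 = ord0.
   The halt state is None. Symbols 0/1 are false/true.
   Direction: true = R (right), false = L (left). *)
Definition prog (n : nat) : finType :=
  {ffun ('I_n.+1 * bool) -> option 'I_n.+1 * bool * bool}.

Inductive status (n : nat) :=
| Running of 'I_n.+1 & (nat -> bool) & nat   (* state, tape, head position *)
| Halted
| FellOff.
Arguments Halted {n}.
Arguments FellOff {n}.

Definition step n (p : prog n) (s : status n) : status n :=
  match s with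
  | Running q tp h =>
      let: (r, j, d) := p (q, tp h) in
      let tp' := fun k => if k == h then j else tp k in
      if d then
        (match r with None => Halted | Some r' => Running r' tp' h.+1 end)
      else if h == 0 then FellOff
      else (match r with None => Halted | Some r' => Running r' tp' h.-1 end)
  | Halted => Halted
  | FellOff => FellOff
  end.

(* unary input m: cells 0..m hold 1 (a block of m+1 ones), then 0s *)
Definition init n (m : nat) : status n :=
  Running ord0 (fun k => k <= m) 0.

Definition halts n (p : prog n) (m : nat) : Prop :=
  exists t, iter t (step p) (init n m) = Halted.

Definition FIN n (p : prog n) : Prop :=
  exists N, forall m, halts p m -> m < N.
Definition COF n (p : prog n) : Prop :=
  exists N, forall m, N <= m -> halts p m.

Definition proportion (R : realType) (B : forall n, prog n -> Prop) (n : nat) : R :=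
  (#|[pred p : prog n | `[< B n p >]]|%:R / #|{: prog n}|%:R)%R.

Definition asym_prob_is (R : realType) (B : forall n, prog n -> Prop) (l : R) : Prop :=
  (proportion R B @ \oo --> l)%classic.
Arguments proportion R B n : clear implicits.
Arguments asym_prob_is R B l : clear implicits.

(* Main.v *)
Require Import Defs.
From mathcomp Require Import all_boot all_order all_algebra.
From mathcomp Require Import boolp classical_sets reals topology normedtype sequences.
From mathcomp Require Import zify.
Set Implicit Arguments. Unset Strict Implicit. Unset Printing Implicit Defensive.
Import Order.TTheory GRing.Theory Num.Theory numFieldNormedType.Exports.
Local Open Scope classical_set_scope.
Local Open Scope ring_scope.

Fixpoint rw (R : realType) (t h : nat) : R :=
  match t with
  | 0 => 1
  | t'.+1 => (rw R t' h.+1 + (if h is h'.+1 then rw R t' h' else 0)) / 2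
  end.

Lemma rwS (R : realType) t h :
  rw R t.+1 h = (rw R t h.+1 + (if h is h'.+1 then rw R t h' else 0)) / 2.
Proof. by []. Qed.

Lemma rw_ge0 (R : realType) t h : 0 <= rw R t h.
Proof.
elim: t h => [|t IH] h /=; first exact: ler01.
apply: divr_ge0 => //; apply: addr_ge0 => //; case: h => //.
Qed.

Lemma rw_le1 (R : realType) t h : rw R t h <= 1.
Proof.
elim: t h => [|t IH] h /=; first by [].
rewrite ler_pdivrMr // mul1r.
have H2 : (if h is h'.+1 then rw R t h' else 0) <= 1 by case: h => // h; exact: IH.
by have := lerD (IH h.+1) H2.
Qed.

Lemma rw_decr (R : realType) t h : rw R t.+1 h <= rw R t h.
Proof.
elim: t h => [|t IH] h; first exact: rw_le1.
rewrite [rw R t.+2 h]rwS [rw R t.+1 h]rwS.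
rewrite ler_pM2r ?invr_gt0 //; apply: lerD; first exact: IH.
by case: h => // h; exact: IH.
Qed.

Lemma rw_homo (R : realType) h : {homo (fun t => rw R t h) : n m / (n <= m)%N >-> m <= n}.
Proof.
move=> n m /subnK <-; elim: (m - n)%N => [|k IH] //.
rewrite addSn; apply: le_trans IH; exact: rw_decr.
Qed.

Lemma rw_cvg (R : realType) h : cvgn (fun t => rw R t h).
Proof.
apply: nonincreasing_is_cvgn; first exact: rw_homo.
by exists 0 => _ [t _ <-]; exact: rw_ge0.
Qed.

Lemma rw_lim0 (R : realType) : limn (fun t => rw R t 0) = 0.
Proof.
set L := fun h => limn (fun t => rw R t h).
have cL h : (fun t => rw R t h) @ \oo --> L h by exact: rw_cvg.
have cLS h : (fun t => rw R t.+1 h) @ \oo --> L h.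
  by have := cL h; rewrite -cvg_shiftS.
have rec h : L h *+ 2 = L h.+1 + (if h is h'.+1 then L h' else 0).
  have c1 : (fun t => rw R t.+1 h *+ 2) @ \oo --> L h *+ 2.
    by apply: cvgMn; exact: cLS.
  have c2 : (fun t => rw R t h.+1 + (if h is h'.+1 then rw R t h' else 0)) @ \oo -->
            L h.+1 + (if h is h'.+1 then L h' else 0).
    apply: cvgD; first exact: cL.
    by clear c1; case: h => [|h]; [exact: cvg_cst | exact: cL].
  have e : (fun t => rw R t.+1 h *+ 2) =
           (fun t => rw R t h.+1 + (if h is h'.+1 then rw R t h' else 0)).
    by apply/funext => t; rewrite rwS -[X in X = _]mulr_natr divfK // pnatr_eq0.
  rewrite e in c1.
  by rewrite -(cvg_lim _ c1) // (cvg_lim _ c2).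
have lin h : L h = h.+1%:R * L 0.
  elim: h {-2}h (leqnn h) => [|k IH] h hk.
    by move: hk; rewrite leqn0 => /eqP ->; rewrite mul1r.
  case: h hk => [|h] hk; first by rewrite mul1r.
  case: h hk => [|h] hk.
    by have := rec 0%N; rewrite addr0 => <-; rewrite mulr_natl.
  have := rec h.+1; rewrite (IH h.+1); last by lia.
  rewrite (IH h); last by lia.
  move/(congr1 (fun x => x - h.+1%:R * L 0)); rewrite addrK => <-.
  rewrite -mulrnAl -mulrBl; congr (_ * _).
  apply/eqP; rewrite subr_eq -mulr_natr -natrM -natrD eqr_nat; apply/eqP; lia.
have L1 h : L h <= 1.
  apply: (@le_trans _ _ (rw R 0 h)); last by [].
  exact: (nonincreasing_cvgn_ge (@rw_homo R h) (@rw_cvg R h) 0).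
have L0 : 0 <= L 0 by apply: limr_ge; [exact: rw_cvg| apply: nearW => t; exact: rw_ge0].
apply/eqP; rewrite eq_le L0 andbT; apply/ler_addgt0Pr => e e0.
rewrite add0r.
set h := Num.truncn e^-1.
have H1 : h.+1%:R * L 0 <= 1 by rewrite -lin.
have H2 : e^-1 < h.+1%:R by exact: truncnS_gt.
rewrite -(@ler_pM2l _ h.+1%:R) ?ltr0Sn //; apply: (le_trans H1).
by rewrite -ler_pdivrMr // div1r; exact: ltW.
Qed.

Lemma rw_small (R : realType) (e : R) : 0 < e -> exists T, rw R T 0 <= e.
Proof.
move=> e0; have c : (fun t => rw R t 0) @ \oo --> (0:R).
  by rewrite -(rw_lim0 R); exact: rw_cvg.
move/cvgrPdist_le: c => /(_ e e0) [N _ HN]; exists N.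
have := HN N (leqnn N); rewrite sub0r normrN ger0_norm //; exact: rw_ge0.
Qed.

Definition updf (K V : finType) (p : {ffun K -> V}) (k : K) (v : V) : {ffun K -> V} :=
  [ffun x => if x == k then v else p x].

Lemma updf_at (K V : finType) (p : {ffun K -> V}) k v : updf p k v k = v.
Proof. by rewrite ffunE eqxx. Qed.

Lemma updf_updf (K V : finType) (p : {ffun K -> V}) k v w : updf (updf p k v) k w = updf p k w.
Proof. by apply/ffunP => x; rewrite !ffunE; case: eqP. Qed.

Lemma updf_id (K V : finType) (p : {ffun K -> V}) k : updf p k (p k) = p.
Proof. by apply/ffunP => x; rewrite !ffunE; case: eqP => // ->. Qed.

Lemma dc (K V : finType) (R : realType) (F : pred {ffun K -> V}) (k : {ffun K -> V} -> K)
  (G : {ffun K -> V} -> V -> R) :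
  (forall p v, F p -> [/\ F (updf p (k p) v), k (updf p (k p) v) = k p & G (updf p (k p) v) =1 G p]) ->
  \sum_(p | F p) G p (p (k p)) *+ #|V| = \sum_(p | F p) \sum_v G p v.
Proof.
move=> Hinv.
pose phi := fun x : {ffun K -> V} * V => if F x.1 then (updf x.1 (k x.1) x.2, x.1 (k x.1)) else x.
have phiK : involutive phi.
  case=> p v; rewrite /phi /=; case Fp: (F p) => /=; last by rewrite Fp.
  have [F' k' _] := Hinv p v Fp.
  by rewrite F' /= k' updf_updf updf_id updf_at.
have e1 : \sum_(p | F p) G p (p (k p)) *+ #|V| =
          \sum_(x : {ffun K -> V} * V) (if F x.1 then G x.1 (x.1 (k x.1)) else 0).
  rewrite -(pair_bigA _ (fun p (v : V) => if F p then G p (p (k p)) else 0)) /= big_mkcond /=.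
  apply: eq_bigr => p _.
  case: (F p); last by rewrite big1 // mul0rn.
  by rewrite sumr_const.
have e2 : \sum_(p | F p) \sum_v G p v =
          \sum_(x : {ffun K -> V} * V) (if F x.1 then G x.1 x.2 else 0).
  rewrite -(pair_bigA _ (fun p (v : V) => if F p then G p v else 0)) /= big_mkcond /=.
  apply: eq_bigr => p _.
  by case: (F p) => //; rewrite big1.
rewrite e1 e2 (reindex_inj (inv_inj phiK)) /=; apply: eq_bigr => -[p v] _.
rewrite /phi /=; case Fp: (F p) => /=; last by rewrite Fp.
have [F' k' G'] := Hinv p v Fp.
by rewrite F' k' updf_at G'.
Qed.

Definition nxt n (s : status n) (v : option 'I_n.+1 * bool * bool) : status n :=
  match s with
  | Running q tp h =>
      let: (r, j, d) := v in
      let tp' := fun k => if k == h then j else tp k in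
      if d then
        (match r with None => Halted | Some r' => Running r' tp' h.+1 end)
      else if h == 0%N then FellOff
      else (match r with None => Halted | Some r' => Running r' tp' h.-1 end)
  | Halted => Halted
  | FellOff => FellOff
  end.

Definition keyof n (s : status n) : 'I_n.+1 * bool :=
  match s with Running q tp h => (q, tp h) | _ => (ord0, false) end.

Lemma step_nxt n (p : prog n) s : step p s = nxt s (p (keyof s)).
Proof. by case: s. Qed.

Definition run n (T : nat) (p : prog n) (i : nat) : status n := iter i (step p) (init n T).

Arguments run : simpl never.

Lemma run0 n T (p : prog n) : run T p 0 = init n T.
Proof. by []. Qed.

Lemma runS n T (p : prog n) i : run T p i.+1 = step p (run T p i).
Proof. by []. Qed.

Definition running n (s : status n) := if s is Running _ _ _ then true else false.
Definition stof n (s : status n) : 'I_n.+1 := if s is Running q _ _ then q else ord0.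
Definition posof n (s : status n) : nat := if s is Running _ _ h then h else 0%N.

Fixpoint sts n T (p : prog n) t : seq 'I_n.+1 :=
  if t is t'.+1 then stof (run T p t) :: sts T p t' else [:: stof (run T p 0)].
Fixpoint fresh n T (p : prog n) t : bool :=
  if t is t'.+1 then [&& fresh T p t', running (run T p t) & stof (run T p t) \notin sts T p t']
  else true.

Lemma fresh_run n T (p : prog n) t : fresh T p t -> running (run T p t).
Proof. by case: t => [|t] //= /and3P[]. Qed.

Lemma fresh_le n T (p : prog n) t i : fresh T p t -> (i <= t)%N -> fresh T p i.
Proof.
elim: t => [|t IH] Ht; first by rewrite leqn0 => /eqP->.
rewrite leq_eqVlt => /orP[/eqP->//|]; rewrite ltnS; apply: IH; by case/and3P: Ht.
Qed.

Lemma sts_in n T (p : prog n) t i : (i <= t)%N -> stof (run T p i) \in sts T p t.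
Proof.
elim: t => [|t IH]; first by rewrite leqn0 => /eqP->; rewrite inE.
rewrite leq_eqVlt => /orP[/eqP->|]; first by rewrite inE eqxx.
by rewrite ltnS => /IH; rewrite /= inE => ->; rewrite orbT.
Qed.

Lemma fresh_neq n T (p : prog n) t i : fresh T p t -> (i < t)%N -> stof (run T p i) != stof (run T p t).
Proof.
case: t => // t /= /and3P[_ _ Hn] Hi; apply: contraNneq Hn => <-; exact: sts_in.
Qed.

Lemma keyof1 n (s : status n) : running s -> (keyof s).1 = stof s.
Proof. by case: s. Qed.

Lemma run_upd n T (p : prog n) t v : fresh T p t -> forall i, (i <= t)%N ->
  run T (updf p (keyof (run T p t)) v) i = run T p i.
Proof.
move=> Ht; elim=> [|i IH] Hi //.
rewrite !runS IH ?(ltnW Hi) // !step_nxt ffunE; case: eqP => // He.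
have := fresh_neq Ht Hi.
rewrite -(keyof1 (fresh_run (fresh_le Ht (ltnW Hi)))) -(keyof1 (fresh_run Ht)) He eqxx.
by [].
Qed.

Lemma fresh_ext n T (p p' : prog n) t : (forall i, (i <= t)%N -> run T p' i = run T p i) ->
  fresh T p' t = fresh T p t /\ sts T p' t = sts T p t.
Proof.
elim: t => [|t IH] H /=; first by [].
have [-> ->] := IH (fun i hi => H i (leqW hi)); by rewrite H.
Qed.

Lemma fresh_inv n T (p : prog n) t v : fresh T p t ->
  let p' := updf p (keyof (run T p t)) v in
  [/\ fresh T p' t, run T p' t = run T p t & sts T p' t = sts T p t].
Proof.
move=> Ht p'; have H := run_upd v Ht.
have [-> ->] := fresh_ext H; split => //; exact: H.
Qed.

Notation VV n := (option 'I_n.+1 * bool * bool)%type.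

Lemma cardV n : #|{: VV n}| = (n.+2 * 2 * 2)%N.
Proof. by rewrite !card_prod card_option card_ord card_bool. Qed.

Lemma sumV (R : realType) n (G : VV n -> R) :
  \sum_(v : VV n) G v = \sum_(o : option 'I_n.+1) \sum_(j : bool) (G (o, j, true) + G (o, j, false)).
Proof.
rewrite (eq_bigr (fun v => G (v.1.1, v.1.2, v.2))); last by case=> [[]].
rewrite -(pair_bigA _ (fun x (d : bool) => G (x.1, x.2, d))) /=.
rewrite -(pair_bigA _ (fun o (j : bool) => \sum_(d : bool) G (o, j, d))) /=.
by apply: eq_bigr => o _; apply: eq_bigr => j _; rewrite big_bool.
Qed.

Lemma sumV_le (R : realType) n (G : VV n -> R) (c : R) :
  (forall o j, G (o, j, true) + G (o, j, false) <= c *+ 2) ->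
  \sum_(v : VV n) G v <= c *+ #|{: VV n}|.
Proof.
move=> H; rewrite sumV.
apply: (le_trans (ler_sum _ (fun o _ => ler_sum _ (fun j _ => H o j)))).
rewrite (eq_bigr (fun _ => c *+ 2 *+ 2)); last by move=> o _; rewrite big_bool.
rewrite sumr_const card_option card_ord cardV -!mulrnA.
by rewrite mulnA mulnC mulnA.
Qed.

Definition Wt (R : realType) n T t (p : prog n) : R :=
  if fresh T p t then rw R (T - t) (posof (run T p t)) else 0.

Definition Gw (R : realType) n T t (p : prog n) (v : VV n) : R :=
  let s := nxt (run T p t) v in if running s then rw R (T - t.+1) (posof s) else 0.

Lemma Gw_ge0 (R : realType) n T t (p : prog n) v : 0 <= Gw R T t p v.
Proof. rewrite /Gw; case: ifP => // _; exact: rw_ge0. Qed.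

Lemma Wt_step (R : realType) n T t : (t < T)%N ->
  \sum_(p : prog n) Wt R T t.+1 p <= \sum_(p : prog n) Wt R T t p.
Proof.
move=> tT.
have H1 : \sum_(p : prog n) Wt R T t.+1 p <=
          \sum_(p : prog n | fresh T p t) Gw R T t p (p (keyof (run T p t))).
  rewrite (big_mkcond (fun p => fresh T p t)); apply: ler_sum => p _; rewrite /Wt.
  case: ifP => [|_]; last by case: ifP => // _; exact: Gw_ge0.
  move=> /= /and3P[-> Hr _]; rewrite /Gw -step_nxt -runS Hr //.
have H2 : (\sum_(p : prog n | fresh T p t) Gw R T t p (p (keyof (run T p t)))) *+ #|{: VV n}| =
          \sum_(p : prog n | fresh T p t) \sum_v Gw R T t p v.
  rewrite -sumrMnl; apply: (dc (F := fun p => fresh T p t) (k := fun p => keyof (run T p t))).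
  move=> p v Fp; have [F' r' s'] := fresh_inv v Fp.
  by split => //; [rewrite r' | move=> w; rewrite /Gw r'].
have H3 : forall p : prog n, fresh T p t ->
    \sum_v Gw R T t p v <= rw R (T - t) (posof (run T p t)) *+ #|{: VV n}|.
  move=> p Fp; rewrite /Gw; have := fresh_run Fp.
  case: (run T p t) => // q tp h _; apply: sumV_le => o j.
  have -> : (T - t = (T - t.+1).+1)%N by lia.
  rewrite rwS -[X in _ <= X]mulr_natr divfK ?pnatr_eq0 //=.
  apply: lerD; first by case: o => //= *; exact: rw_ge0.
  by case: h => [|h] //=; case: o => //= *; exact: rw_ge0.
have := lerMn2r #|{: VV n}| (\sum_(p : prog n) Wt R T t.+1 p) (\sum_(p : prog n) Wt R T t p).
have Vpos : (#|{: VV n}| == 0) = false by rewrite cardV.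
rewrite Vpos /= => <-.
apply: (le_trans (_ : _ <= (\sum_(p : prog n | fresh T p t) Gw R T t p (p (keyof (run T p t)))) *+ #|{: VV n}|)).
  by rewrite lerMn2r H1 orbT.
rewrite H2 -sumrMnl (big_mkcond (fun p => fresh T p t)) /=; apply: ler_sum => p _.
by rewrite /Wt; case: ifP => Fp; [exact: H3 | rewrite mul0rn].
Qed.

Lemma fresh_count (R : realType) n T :
  \sum_(p : prog n) ((fresh T p T)%:R : R) <= #|{: prog n}|%:R * rw R T 0.
Proof.
have H : forall t, (t <= T)%N -> \sum_(p : prog n) Wt R T t p <= \sum_(p : prog n) Wt R T 0 p.
  elim=> [|t IH] Ht //; apply: le_trans (IH (ltnW Ht)); exact: Wt_step.
have e0 : \sum_(p : prog n) Wt R T 0 p = #|{: prog n}|%:R * rw R T 0.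
  by rewrite /Wt /= subn0 sumr_const mulr_natl.
have eT : \sum_(p : prog n) Wt R T T p = \sum_(p : prog n) ((fresh T p T)%:R : R).
  by apply: eq_bigr => p _; rewrite /Wt subnn; case: (fresh T p T).
by rewrite -eT -e0; exact: H.
Qed.

Definition badst n (s : status n) (L : seq 'I_n.+1) : bool :=
  match s with Halted => true | Running q _ _ => q \in L | FellOff => false end.
Definition bad n T (p : prog n) t := fresh T p t && badst (run T p t.+1) (sts T p t).

Lemma size_sts n T (p : prog n) t : size (sts T p t) = t.+1.
Proof. by elim: t => //= t ->. Qed.

Lemma sum_mem (R : realType) (X : finType) (s : seq X) : \sum_(x : X) ((x \in s)%:R : R) = #|s|%:R.
Proof.
rewrite -sum1_card natr_sum [RHS]big_mkcond /=; apply: eq_bigr => x _; by case: (x \in s).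
Qed.

Lemma imply_le (R : realType) (a b : bool) : (a -> b) -> (a%:R <= b%:R :> R).
Proof. by case: a; case: b => // /(_ isT). Qed.

Lemma bad_count (R : realType) n T t :
  (\sum_(p : prog n) ((bad T p t)%:R : R)) *+ #|{: VV n}| <= #|{: prog n}|%:R * (t.+2 * 4)%:R.
Proof.
pose G := fun (p : prog n) (v : VV n) => ((badst (nxt (run T p t) v) (sts T p t))%:R : R).
have e1 : \sum_(p : prog n) ((bad T p t)%:R : R) =
          \sum_(p : prog n | fresh T p t) G p (p (keyof (run T p t))).
  rewrite (big_mkcond (fun p => fresh T p t)); apply: eq_bigr => p _.
  by rewrite /bad /G -step_nxt -runS; case: (fresh T p t).
have H2 : (\sum_(p : prog n | fresh T p t) G p (p (keyof (run T p t)))) *+ #|{: VV n}| =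
          \sum_(p : prog n | fresh T p t) \sum_v G p v.
  rewrite -sumrMnl; apply: (dc (F := fun p => fresh T p t) (k := fun p => keyof (run T p t))).
  move=> p v Fp; have [F' r' s'] := fresh_inv v Fp.
  by split => //; [rewrite r' | move=> w; rewrite /G r' s'].
have H3 : forall p : prog n, fresh T p t -> \sum_v G p v <= (t.+2 * 4)%:R.
  move=> p Fp; set L' := None :: map Some (sts T p t).
  have Hg : forall v : VV n, G p v <= (v.1.1 \in L')%:R.
    move=> [[o j] d]; apply: imply_le; rewrite /G; have := fresh_run Fp.
    case: (run T p t) => // q tp h _ /=.
    have Hs : forall r, r \in sts T p t -> Some r \in L'.
      by move=> r Hr; rewrite inE (mem_map (@Some_inj _)) Hr orbT.
    by case: d; [|case: (h == 0%N)]; case: o => //= r; exact: Hs.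
  apply: (le_trans (ler_sum _ (fun v _ => Hg v))).
  rewrite sumV (eq_bigr (fun o => ((o \in L')%:R : R) *+ 2 *+ 2)); last first.
    by move=> o _; rewrite big_bool /= -mulr2n.
  rewrite !sumrMnl -mulrnA sum_mem -[X in X <= _]mulr_natr -natrM ler_nat leq_mul2r /=.
  by have := card_size L'; rewrite /= size_map size_sts.
rewrite e1 H2 mulr_natl.
apply: (le_trans (_ : _ <= \sum_(p : prog n) (t.+2 * 4)%:R)); last by rewrite sumr_const.
rewrite [X in _ <= X](bigID (fun p => fresh T p t)) /= -[X in X <= _]addr0.
apply: lerD; first by apply: ler_sum => p Fp; exact: H3.
by apply: sumr_ge0.
Qed.

Definition simrel n T (s1 s2 : status n) : Prop :=
  match s1, s2 with
  | Running q1 tp1 h1, Running q2 tp2 h2 => [/\ q1 = q2, h1 = h2 & forall k, (k <= T)%N -> tp1 k = tp2 k]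
  | Halted, Halted => True
  | FellOff, FellOff => True
  | _, _ => False
  end.

Lemma sim_step n T (p : prog n) s1 s2 :
  simrel T s1 s2 -> (posof s1 <= T)%N -> simrel T (step p s1) (step p s2).
Proof.
case: s1 => [q1 tp1 h1||]; case: s2 => [q2 tp2 h2||] //= [-> -> E] hT.
rewrite (E _ hT); case: (p (q2, tp2 h2)) => [[r j] d].
have E' : forall k, (k <= T)%N -> (if k == h2 then j else tp1 k) = (if k == h2 then j else tp2 k).
  by move=> k hk; rewrite E.
by case: d; [case: r|case: (h2 == 0%N); last case: r].
Qed.

Lemma pos_step n (p : prog n) s : (posof (step p s) <= (posof s).+1)%N.
Proof.
case: s => [q tp h||] //=; case: (p (q, tp h)) => [[r j] d].
case: d; case: r => //=; try (case: (h == 0%N) => //=); lia.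
Qed.

Lemma iter_pos n (p : prog n) m i : (posof (iter i (step p) (init n m)) <= i)%N.
Proof. elim: i => //= i IH; exact: leq_trans (pos_step _ _) _. Qed.

Lemma sim_run n T m (p : prog n) : (T <= m)%N -> forall i, (i <= T)%N ->
  simrel T (iter i (step p) (init n T)) (iter i (step p) (init n m)).
Proof.
move=> Tm; elim=> [|i IH] Hi.
  by split => // k hk; rewrite hk (leq_trans hk Tm).
rewrite !iterS; apply: sim_step; first exact: IH (ltnW Hi).
exact: leq_trans (iter_pos _ _ _) (ltnW Hi).
Qed.

Lemma iter_halt n (p : prog n) k : iter k (step p) Halted = Halted.
Proof. by elim: k => //= k ->. Qed.
Lemma iter_fell n (p : prog n) k : iter k (step p) FellOff = FellOff.
Proof. by elim: k => //= k ->. Qed.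

Lemma good_FIN n T (p : prog n) : run T p T = FellOff -> FIN p.
Proof.
move=> HT; exists T => m [t Ht]; rewrite ltnNge; apply/negP => Tm.
have := sim_run p Tm (leqnn T).
change (iter T (step p) (init n T)) with (run T p T); rewrite HT.
case E: (iter T (step p) (init n m)) => // _.
case: (leqP t T) => tT.
  move: E; rewrite -(subnK tT) iterD Ht iter_halt //.
move: Ht; rewrite -(subnK (ltnW tT)) iterD E iter_fell //.
Qed.

Definition isFell n (s : status n) := if s is FellOff then true else false.

Lemma decomp n T (p : prog n) t :
  [|| fresh T p t, [exists i : 'I_t, bad T p i] | isFell (run T p t)].
Proof.
elim: t => [|t IH] //.
case/or3P: IH => [Ft|/existsP[i Hi]|Hf].
- case E: (run T p t.+1) => [q tp h||].
  + case Hq: (q \in sts T p t).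
      by apply/or3P/Or32/existsP; exists ord_max; rewrite /bad Ft E /= Hq.
    by rewrite /= Ft E /= Hq.
  + by apply/or3P/Or32/existsP; exists ord_max; rewrite /bad Ft E.
  + by rewrite !orbT.
- by apply/or3P/Or32/existsP; exists (widen_ord (leqnSn t) i).
- by move: Hf; rewrite runS; case: (run T p t) => //= _; rewrite !orbT.
Qed.

Lemma notgood_le (R : realType) n T (p : prog n) :
  ((~~ isFell (run T p T))%:R : R) <= (fresh T p T)%:R + \sum_(i < T) ((bad T p i)%:R : R).
Proof.
case/or3P: (decomp T p T) => [->|/existsP[i Hi]|->] /=.
- apply: (le_trans (_ : _ <= 1)); first by case: (~~ _).
  by rewrite lerDl; apply: sumr_ge0 => i _; exact: ler0n.
- apply: (le_trans (_ : _ <= \sum_(i < T) ((bad T p i)%:R : R))).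
    rewrite (bigD1 i) //= Hi; apply: (le_trans (_ : _ <= 1 + 0)).
      by rewrite addr0; case: (~~ _).
    by rewrite lerD2l; apply: sumr_ge0 => j _; exact: ler0n.
  by rewrite lerDr ler0n.
- by apply: addr_ge0; [exact: ler0n | apply: sumr_ge0 => j _; exact: ler0n].
Qed.

Lemma bad_count' (R : realType) n T t : (t < T)%N ->
  \sum_(p : prog n) ((bad T p t)%:R : R) <= #|{: prog n}|%:R * ((T.+1 * 4)%:R / #|{: VV n}|%:R).
Proof.
move=> tT; have V0 : (0 : R) < #|{: VV n}|%:R by rewrite cardV ltr0n.
rewrite mulrA ler_pdivlMr //; apply: (le_trans _ (_ : #|{: prog n}|%:R * (t.+2 * 4)%:R <= _)).
  rewrite [X in X <= _]mulr_natr; exact: bad_count.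
by rewrite ler_pM2l ?ltr0n ?card_gt0 ?ler_nat ?leq_mul2r ?ltnS ?tT ?orbT //; apply/card_gt0P; exists [ffun => (None, false, false)].
Qed.

Lemma notgood_count (R : realType) n T :
  \sum_(p : prog n) ((~~ isFell (run T p T))%:R : R) <=
  #|{: prog n}|%:R * (rw R T 0 + T%:R * ((T.+1 * 4)%:R / #|{: VV n}|%:R)).
Proof.
apply: (le_trans (ler_sum _ (fun p _ => notgood_le R T p))).
rewrite big_split /= exchange_big /= mulrDr; apply: lerD; first exact: fresh_count.
apply: (le_trans (ler_sum _ (fun i _ => bad_count' R n (ltn_ord i)))).
rewrite sumr_const card_ord.
by rewrite -[_ *+ T]mulr_natr -mulrA (mulrC _ T%:R).
Qed.

Lemma sum_pred (R : realType) (X : finType) (P : pred X) : \sum_(x : X) ((P x)%:R : R) = #|P|%:R.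
Proof.
rewrite -sum1_card natr_sum [RHS]big_mkcond; apply: eq_bigr => x _; rewrite unfold_in.
by case: (P x).
Qed.

Lemma X_gt0 n : (0 < #|{: prog n}|)%N.
Proof. by apply/card_gt0P; exists [ffun => (None, false, false)]. Qed.

Lemma FIN_bound (R : realType) n T :
  1 - proportion R FIN n <= rw R T 0 + T%:R * ((T.+1 * 4)%:R / #|{: VV n}|%:R).
Proof.
set b := (X in _ <= X).
have X0 : (0 : R) < #|{: prog n}|%:R by rewrite ltr0n X_gt0.
have Hsub : (#|[pred p : prog n | isFell (run T p T)]| <= #|[pred p : prog n | `[< FIN p >]]|)%N.
  apply: subset_leq_card; apply/fintype.subsetP => p; rewrite !inE => Hp; apply/asboolP.
  apply/asboolP.
  by apply: (good_FIN (T := T)); move: Hp; case: (run T p T).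
have key : #|{: prog n}|%:R <= #|{: prog n}|%:R * b + #|[pred p : prog n | `[< FIN p >]]|%:R.
  apply: (le_trans (_ : _ <= \sum_(p : prog n) ((~~ isFell (run T p T))%:R : R) +
                              \sum_(p : prog n) ((isFell (run T p T))%:R : R))).
    rewrite -big_split /= (eq_bigr (fun _ => 1)); last by move=> p _; case: (isFell (run T p T)); rewrite /= ?add0r ?addr0.
    by rewrite sumr_const.
  apply: lerD; first exact: notgood_count.
  by rewrite (sum_pred R (fun p : prog n => isFell (run T p T))) ler_nat.
rewrite /proportion lerBlDr -(ler_pM2r X0) mulrDl divfK ?mul1r //; last by rewrite gt_eqF.
by rewrite [b * _]mulrC.
Qed.

Lemma FIN_COF n (p : prog n) : FIN p -> COF p -> False.
Proof.
move=> [N HN] [M HM]; have := HN (maxn N M) (HM _ (leq_maxr N M)).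
by rewrite ltnNge leq_maxl.
Qed.

Lemma COF_bound (R : realType) n : proportion R COF n <= 1 - proportion R FIN n.
Proof.
have X0 : (0 : R) < #|{: prog n}|%:R by rewrite ltr0n X_gt0.
rewrite /proportion lerBrDr -mulrDl ler_pdivrMr // mul1r.
rewrite -(sum_pred R [pred p : prog n | `[< COF p >]]) -(sum_pred R [pred p : prog n | `[< FIN p >]]).
rewrite -big_split /= -[X in _ <= X]sumr_const; apply: ler_sum => p _.
case: (asboolP (COF p)) => Hc; case: (asboolP (FIN p)) => Hf //=.
- by case: (FIN_COF Hf Hc).
- by rewrite addr0.
- by rewrite add0r.
- by rewrite addr0 ler01.
Qed.

Lemma FIN_tail (R : realType) (e : R) : 0 < e ->
  exists N, forall n, (N <= n)%N -> 1 - proportion R FIN n <= e.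
Proof.
move=> e0; have e20 : 0 < e / 2 by rewrite divr_gt0.
have [T HT] := rw_small e20.
set c : R := T%:R * (T.+1 * 4)%:R.
exists (Num.truncn (c / (e / 2))) => n Nn.
apply: (le_trans (FIN_bound R n T)); rewrite [e in _ <= e](splitr e).
apply: lerD => //.
rewrite mulrA -/c ler_pdivrMr ?cardV ?ltr0n //.
have H1 := truncnS_gt (c / (e / 2)).
rewrite -ler_pdivrMl // mulrC; apply/ltW; apply: (lt_le_trans H1).
rewrite ler_nat.
apply: (leq_ltn_trans Nn); lia.
Qed.

Lemma prop_le1 (R : realType) B n : proportion R B n <= 1.
Proof.
have X0 : (0 : R) < #|{: prog n}|%:R by rewrite ltr0n X_gt0.
by rewrite /proportion ler_pdivrMr // mul1r ler_nat max_card.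
Qed.

Lemma prop_ge0 (R : realType) B n : 0 <= proportion R B n.
Proof. by rewrite /proportion divr_ge0. Qed.

Theorem mainTheorem9 (R : realType) :
  asym_prob_is R FIN 1%R /\ asym_prob_is R COF 0%R.
Proof.
split; apply/cvgrPdist_le => e e0; have [N HN] := FIN_tail e0; exists N => // n /= Nn.
- by rewrite ger0_norm ?subr_ge0 ?prop_le1 //; exact: HN.
- rewrite sub0r normrN ger0_norm ?prop_ge0 //.
  exact: le_trans (COF_bound R n) (HN n Nn).
Qed.
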